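(* Let $U\colon\mathcal D\to\mathcal C$ be a strong monoidal functor between left closed monoidal categories. If $U$ is conservative and left closed, and $\mathcal C$ is left autonomous, then $\mathcal D$ is left autonomous.
   Context: Monoidal categories are strict. A monoidal category is left closed if for every object $X$ the functor $?\otimes X$ has a right adjoint $[X,?]^l$, with counit $\mathrm{ev}^X_Y\colon [X,Y]^l\otimes X\to Y$. A strong monoidal functor $U$ with structure isomorphisms $U_2(A,B)\colon UA\otimes UB\to U(A\otimes B)$, $U_0\colon\mathbb 1\to U\mathbb 1$ between left closed monoidal categories is left closed if for all $X,Y$ the morphism $U^l_{X,Y}\colon U[X,Y]^l\to[UX,UY]^l$ corresponding by adjunction to $U(\mathrm{ev}^X_Y)U_2([X,Y]^l,X)$ is an isomorphism. Left autonomous means every object $X$ has a left dual ${}^\vee X$ with $\mathrm{ev}_X\colon{}^\vee X\otimes X\to\mathbb 1$, $\mathrm{coev}_X\colon\mathbb 1\to X\otimes{}^\vee X$ satisfying the zigzag identities. Conservative means reflecting isomorphisms. *)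

(* Defs.v *)
Set Implicit Arguments.
Unset Strict Implicit.

Record Category := {
  ob :> Type;
  hom : ob -> ob -> Type;
  idm : forall A, hom A A;
  comp : forall A B C, hom B C -> hom A B -> hom A C;
  comp_id_l : forall A B (f : hom A B), comp (idm B) f = f;
  comp_id_r : forall A B (f : hom A B), comp f (idm A) = f;
  comp_assoc : forall A B C D (h : hom C D) (g : hom B C) (f : hom A B),
      comp h (comp g f) = comp (comp h g) f
}.

Arguments hom : clear implicits.
Arguments idm {c} A.
Arguments comp {c A B C} _ _.
Notation "g \o f" := (comp g f) (at level 40, left associativity).

(** Identity morphism transported along an equality of objects
    (used to express strictness: structural isos are identities). *)
Definition castm {C : Category} {A B : ob C} (e : A = B) : hom C A B :=
  match e in _ = B' return hom C A B' with eq_refl => idm A end.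

Definition is_iso {C : Category} {A B : ob C} (f : hom C A B) : Prop :=
  exists g : hom C B A, g \o f = idm A /\ f \o g = idm B.

Record StrictMonoidal := {
  mcat :> Category;
  tens : ob mcat -> ob mcat -> ob mcat;
  munit : ob mcat;
  tensm : forall A A' B B', hom mcat A A' -> hom mcat B B' ->
            hom mcat (tens A B) (tens A' B');
  tensm_id : forall A B, tensm (idm A) (idm B) = idm (tens A B);
  tensm_comp : forall A A' A'' B B' B''
      (f' : hom mcat A' A'') (f : hom mcat A A')
      (g' : hom mcat B' B'') (g : hom mcat B B'),
      tensm (f' \o f) (g' \o g) = tensm f' g' \o tensm f g;
  (* strictness: associator and unitors are identities *)
  assoc_ob : forall A B C, tens A (tens B C) = tens (tens A B) C;
  lunit_ob : forall A, tens munit A = A;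
  runit_ob : forall A, tens A munit = A;
  assoc_nat : forall A A' B B' C C'
      (f : hom mcat A A') (g : hom mcat B B') (h : hom mcat C C'),
      castm (assoc_ob A' B' C') \o tensm f (tensm g h)
      = tensm (tensm f g) h \o castm (assoc_ob A B C);
  lunit_nat : forall A A' (f : hom mcat A A'),
      castm (lunit_ob A') \o tensm (idm munit) f = f \o castm (lunit_ob A);
  runit_nat : forall A A' (f : hom mcat A A'),
      castm (runit_ob A') \o tensm f (idm munit) = f \o castm (runit_ob A)
}.

Arguments tens {s} _ _.
Arguments munit {s}.
Arguments tensm {s A A' B B'} _ _.
Arguments assoc_ob {s} A B C.
Arguments lunit_ob {s} A.
Arguments runit_ob {s} A.

(** * Left closed structure: for every X, (? ⊗ X) has a right adjoint
    [X,?]^l with counit ev^X_Y : [X,Y]^l ⊗ X -> Y, expressed by the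
    universal property of the counit. *)
Record LeftClosed (M : StrictMonoidal) := {
  lihom : ob M -> ob M -> ob M;
  lev : forall X Y, hom M (tens (lihom X Y) X) Y;
  lcurry : forall X Y Z, hom M (tens Z X) Y -> hom M Z (lihom X Y);
  lcurry_spec : forall X Y Z (f : hom M (tens Z X) Y),
      lev X Y \o tensm (lcurry f) (idm X) = f;
  lcurry_uniq : forall X Y Z (f : hom M (tens Z X) Y) (g : hom M Z (lihom X Y)),
      lev X Y \o tensm g (idm X) = f -> g = lcurry f
}.

Arguments lihom {M} l X Y.
Arguments lev {M} l X Y.
Arguments lcurry {M} l {X Y Z} _.

(** * Left duals and left autonomy (zigzag identities with the strict
    structural identifications made explicit by castm). *)
Definition is_left_dual (M : StrictMonoidal) (X Xv : ob M)
    (e : hom M (tens Xv X) munit) (c : hom M munit (tens X Xv)) : Prop :=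
  castm (runit_ob X) \o tensm (idm X) e \o castm (eq_sym (assoc_ob X Xv X))
    \o tensm c (idm X) \o castm (eq_sym (lunit_ob X)) = idm X
  /\
  castm (lunit_ob Xv) \o tensm e (idm Xv) \o castm (assoc_ob Xv X Xv)
    \o tensm (idm Xv) c \o castm (eq_sym (runit_ob Xv)) = idm Xv.

Definition left_autonomous (M : StrictMonoidal) : Prop :=
  forall X : ob M, exists (Xv : ob M) (e : hom M (tens Xv X) munit)
    (c : hom M munit (tens X Xv)), is_left_dual e c.

Record StrongMonoidalFunctor (D C : StrictMonoidal) := {
  fob :> ob D -> ob C;
  fmap : forall A B, hom D A B -> hom C (fob A) (fob B);
  fmap_id : forall A, fmap (idm A) = idm (fob A);
  fmap_comp : forall A B E (g : hom D B E) (f : hom D A B),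
      fmap (g \o f) = fmap g \o fmap f;
  U2 : forall A B, hom C (tens (fob A) (fob B)) (fob (tens A B));
  U0 : hom C munit (fob munit);
  U2_iso : forall A B, is_iso (U2 A B);
  U0_iso : is_iso U0;
  U2_nat : forall A A' B B' (f : hom D A A') (g : hom D B B'),
      fmap (tensm f g) \o U2 A B = U2 A' B' \o tensm (fmap f) (fmap g);
  U2_assoc : forall A B E,
      U2 (tens A B) E \o tensm (U2 A B) (idm (fob E))
        \o castm (assoc_ob (fob A) (fob B) (fob E))
      = fmap (castm (assoc_ob A B E)) \o U2 A (tens B E)
        \o tensm (idm (fob A)) (U2 B E);
  U2_lunit : forall A,
      U2 munit A \o tensm U0 (idm (fob A))
      = fmap (castm (eq_sym (lunit_ob A))) \o castm (lunit_ob (fob A));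
  U2_runit : forall A,
      U2 A munit \o tensm (idm (fob A)) U0
      = fmap (castm (eq_sym (runit_ob A))) \o castm (runit_ob (fob A))
}.

Arguments fmap {D C} s {A B} _.
Arguments U2 {D C} s A B.
Arguments U0 {D C} s.

Definition conservative (D C : StrictMonoidal) (U : StrongMonoidalFunctor D C) :=
  forall A B (f : hom D A B), is_iso (fmap U f) -> is_iso f.

Definition Ul (D C : StrictMonoidal) (LD : LeftClosed D) (LC : LeftClosed C)
    (U : StrongMonoidalFunctor D C) (X Y : ob D)
    : hom C (U (lihom LD X Y)) (lihom LC (U X) (U Y)) :=
  lcurry LC (fmap U (lev LD X Y) \o U2 U (lihom LD X Y) X).

Definition left_closed_functor (D C : StrictMonoidal) (LD : LeftClosed D)
    (LC : LeftClosed C) (U : StrongMonoidalFunctor D C) : Prop :=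
  forall X Y : ob D, is_iso (Ul LD LC U X Y).

(* Main.v *)
Require Import Defs.
From Stdlib Require Import ProofIrrelevance.
From Corelib Require Import ssreflect.

Lemma castm_pi {C : Category} {A B : ob C} (e1 e2 : A = B) : castm e1 = castm e2.
Proof. by rewrite (proof_irrelevance _ e1 e2). Qed.

Lemma castm_comp {C : Category} {A B D : ob C} (e1 : A = B) (e2 : B = D) :
  castm e2 \o castm e1 = castm (eq_trans e1 e2).
Proof. destruct e2; simpl; apply comp_id_l. Qed.

Lemma castm_refl' {C : Category} {A : ob C} (e : A = A) : castm e = idm A.
Proof. by rewrite (castm_pi e eq_refl). Qed.

Lemma rwk {C : Category} {A B B' D : ob C} {g : hom C B D} {f : hom C A B}
  {g' : hom C B' D} {f' : hom C A B'} :
  g \o f = g' \o f' -> forall Z (k : hom C Z A), g \o (f \o k) = g' \o (f' \o k).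
Proof. intros H Z k. by rewrite !comp_assoc H. Qed.

Lemma castm_flip {C : Category} {A B A' B' : ob C} (e : A' = B') (e' : A = B)
  (x : hom C A A') (y : hom C B B') :
  castm e \o x = y \o castm e' -> castm (eq_sym e) \o y = x \o castm (eq_sym e').
Proof. destruct e, e'; simpl. rewrite !comp_id_l !comp_id_r. by intros ->. Qed.

Lemma tensm_castm {M : StrictMonoidal} {A A' B B' : ob M} (e1 : A = A') (e2 : B = B') :
  tensm (castm e1) (castm e2) = castm (f_equal2 tens e1 e2).
Proof. destruct e1, e2; rewrite !castm_refl'; apply tensm_id. Qed.

Lemma tensm_castm_idl {M : StrictMonoidal} {A B B' : ob M} (e : B = B') :
  tensm (idm A) (castm e) = castm (f_equal (@tens M A) e).
Proof. destruct e; rewrite !castm_refl'; apply tensm_id. Qed.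

Lemma tensm_castm_idr {M : StrictMonoidal} {A A' B : ob M} (e : A = A') :
  tensm (castm e) (idm B) = castm (f_equal (fun X => @tens M X B) e).
Proof. destruct e; rewrite !castm_refl'; apply tensm_id. Qed.

Lemma tensm_compl {M : StrictMonoidal} {A A' A'' B : ob M} (f' : hom M A' A'') (f : hom M A A') :
  tensm (f' \o f) (idm B) = tensm f' (idm B) \o tensm f (idm B).
Proof. by rewrite -tensm_comp comp_id_l. Qed.

Lemma tensm_compr {M : StrictMonoidal} {A B B' B'' : ob M} (g' : hom M B' B'') (g : hom M B B') :
  tensm (idm A) (g' \o g) = tensm (idm A) g' \o tensm (idm A) g.
Proof. by rewrite -tensm_comp comp_id_l. Qed.

Lemma interch1 {M : StrictMonoidal} {A A' B B' : ob M} (f : hom M A A') (g : hom M B B') :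
  tensm f (idm B') \o tensm (idm A) g = tensm f g.
Proof. by rewrite -tensm_comp comp_id_l comp_id_r. Qed.

Lemma interch2 {M : StrictMonoidal} {A A' B B' : ob M} (f : hom M A A') (g : hom M B B') :
  tensm (idm A') g \o tensm f (idm B) = tensm f g.
Proof. by rewrite -tensm_comp comp_id_l comp_id_r. Qed.

Lemma assoc_nat' {M : StrictMonoidal} {A A' B B' C C' : ob M}
  (f : hom M A A') (g : hom M B B') (h : hom M C C') :
  castm (eq_sym (assoc_ob A' B' C')) \o tensm (tensm f g) h
  = tensm f (tensm g h) \o castm (eq_sym (assoc_ob A B C)).
Proof. apply castm_flip, assoc_nat. Qed.

Lemma lunit_nat' {M : StrictMonoidal} {A A' : ob M} (f : hom M A A') :
  castm (eq_sym (lunit_ob A')) \o f = tensm (idm munit) f \o castm (eq_sym (lunit_ob A)).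
Proof. apply castm_flip, lunit_nat. Qed.

Lemma runit_nat' {M : StrictMonoidal} {A A' : ob M} (f : hom M A A') :
  castm (eq_sym (runit_ob A')) \o f = tensm f (idm munit) \o castm (eq_sym (runit_ob A)).
Proof. apply castm_flip, runit_nat. Qed.

Lemma tensm_idid {M : StrictMonoidal} {A B : ob M} : tensm (idm A) (idm B) = idm (tens A B).
Proof. apply tensm_id. Qed.

Lemma tens_assoc_r {M : StrictMonoidal} {A A' B B' C C' : ob M}
  (f : hom M A A') (g : hom M B B') (h : hom M C C') :
  tensm f (tensm g h) = castm (eq_sym (assoc_ob A' B' C')) \o tensm (tensm f g) h \o castm (assoc_ob A B C).
Proof.
  rewrite -comp_assoc -assoc_nat comp_assoc castm_comp castm_refl'. by rewrite comp_id_l.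
Qed.

Lemma tens_assoc_l {M : StrictMonoidal} {A A' B B' C C' : ob M}
  (f : hom M A A') (g : hom M B B') (h : hom M C C') :
  tensm (tensm f g) h = castm (assoc_ob A' B' C') \o tensm f (tensm g h) \o castm (eq_sym (assoc_ob A B C)).
Proof.
  rewrite -comp_assoc -assoc_nat' comp_assoc castm_comp castm_refl'. by rewrite comp_id_l.
Qed.

Lemma castm_comp_k {C : Category} {A B D Z : ob C} (e1 : A = B) (e2 : B = D) (k : hom C Z A) :
  castm e2 \o (castm e1 \o k) = castm (eq_trans e1 e2) \o k.
Proof. by rewrite comp_assoc castm_comp. Qed.

Ltac rnorm := rewrite -?comp_assoc.
Ltac cmerge := repeat (first [ rewrite castm_comp_k | rewrite castm_comp ]).
Ltac cnorm := rewrite ?tensm_castm_idl ?tensm_castm_idr ?tensm_castm; rnorm; cmerge.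

Ltac ceq := repeat (first [ reflexivity | apply castm_pi | f_equal ]).

Lemma K {M : StrictMonoidal} (X V Y : ob M) (e : hom M (tens V X) munit) (c : hom M munit (tens X V)) :
  castm (runit_ob (tens Y X)) \o tensm (idm (tens Y X)) e \o castm (eq_sym (assoc_ob (tens Y X) V X))
   \o tensm (castm (assoc_ob Y X V)) (idm X) \o tensm (tensm (idm Y) c) (idm X)
   \o tensm (castm (eq_sym (runit_ob Y))) (idm X)
  = tensm (idm Y) (castm (runit_ob X) \o tensm (idm X) e \o castm (eq_sym (assoc_ob X V X))
       \o tensm c (idm X) \o castm (eq_sym (lunit_ob X))).
Proof.
  rewrite !tensm_compr.
  rewrite (tens_assoc_r (idm Y) (idm X) e) (tens_assoc_r (idm Y) c (idm X)) !tensm_idid.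
  cnorm.
  ceq.
Qed.

Lemma rwk1 {C : Category} {A B D : ob C} {g : hom C B D} {f : hom C A B} {h : hom C A D} :
  g \o f = h -> forall Z (k : hom C Z A), g \o (f \o k) = h \o k.
Proof. intros H Z k. by rewrite comp_assoc H. Qed.

Definition Z1c {M : StrictMonoidal} {X V : ob M} (e : hom M (tens V X) munit) (c : hom M munit (tens X V)) :=
  castm (runit_ob X) \o tensm (idm X) e \o castm (eq_sym (assoc_ob X V X))
    \o tensm c (idm X) \o castm (eq_sym (lunit_ob X)).
Definition Z2c {M : StrictMonoidal} {X V : ob M} (e : hom M (tens V X) munit) (c : hom M munit (tens X V)) :=
  castm (lunit_ob V) \o tensm e (idm V) \o castm (assoc_ob V X V)
    \o tensm (idm V) c \o castm (eq_sym (runit_ob V)).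

Lemma Kr {M : StrictMonoidal} (X V Y : ob M) (e : hom M (tens V X) munit) (c : hom M munit (tens X V)) :
  Z1c e c = idm X ->
  castm (runit_ob (tens Y X)) \o (tensm (idm (tens Y X)) e \o (castm (eq_sym (assoc_ob (tens Y X) V X))
   \o (tensm (castm (assoc_ob Y X V)) (idm X) \o (tensm (tensm (idm Y) c) (idm X)
   \o tensm (castm (eq_sym (runit_ob Y))) (idm X)))))
  = idm (tens Y X).
Proof.
  intros H1. transitivity (tensm (idm Y) (Z1c e c)); last by rewrite H1 tensm_idid.
  rewrite /Z1c -K. rnorm. reflexivity.
Qed.

Lemma K2 {M : StrictMonoidal} (X V : ob M) (e : hom M (tens V X) munit) (c : hom M munit (tens X V)) :
  Z2c e c = idm V ->
  tensm (castm (runit_ob X) \o tensm (idm X) e \o castm (eq_sym (assoc_ob X V X))) (idm V)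
   \o (castm (assoc_ob (tens X V) X V) \o (tensm (idm (tens X V)) c \o castm (eq_sym (runit_ob (tens X V)))))
  = idm (tens X V).
Proof.
  intros H2. transitivity (tensm (idm X) (Z2c e c)); last by rewrite H2 tensm_idid.
  rewrite /Z2c.
  rewrite !tensm_compl !tensm_compr.
  rewrite (tens_assoc_r (idm X) e (idm V)) (tens_assoc_r (idm X) (idm V) c) !tensm_idid.
  cnorm. ceq.
Qed.

Lemma assoc_nat1 {M : StrictMonoidal} {A A' B C : ob M} (f : hom M A A') :
  castm (assoc_ob A' B C) \o tensm f (idm (tens B C))
  = tensm (tensm f (idm B)) (idm C) \o castm (assoc_ob A B C).
Proof. by rewrite -tensm_idid assoc_nat. Qed.

Lemma S1 {M : StrictMonoidal} {V X Z : ob M} (f : hom M (tens V X) munit)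
  (k : hom M Z (tens (tens (tens V X) V) X)) :
  f \o (tensm (castm (lunit_ob V)) (idm X) \o (tensm (tensm f (idm V)) (idm X) \o k))
  = f \o (castm (runit_ob (tens V X)) \o (tensm (idm (tens V X)) f
      \o (castm (eq_sym (assoc_ob (tens V X) V X)) \o k))).
Proof.
  rewrite tens_assoc_l tensm_idid tensm_castm_idr. rnorm. cmerge.
  rewrite (castm_pi _ (lunit_ob (tens V X))).
  rewrite -(rwk (lunit_nat f)).
  rewrite (rwk1 (interch2 f f)) -(rwk1 (interch1 f f)).
  rewrite (castm_pi (lunit_ob (@munit M)) (runit_ob (@munit M))).
  by rewrite (rwk (runit_nat f)).
Qed.

Lemma S2 {M : StrictMonoidal} {A V X Z : ob M} (E : hom M A X) (e : hom M (tens V X) munit)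
  (k : hom M Z (tens (tens A V) X)) :
  castm (runit_ob X) \o (tensm (idm X) e \o (castm (eq_sym (assoc_ob X V X)) \o (tensm (tensm E (idm V)) (idm X) \o k)))
  = E \o (castm (runit_ob A) \o (tensm (idm A) e \o (castm (eq_sym (assoc_ob A V X)) \o k))).
Proof.
  rewrite (rwk (assoc_nat' E (idm V) (idm X))) tensm_idid.
  rewrite (rwk1 (interch2 E e)) -(rwk1 (interch1 E e)).
  by rewrite (rwk (runit_nat E)).
Qed.

Lemma Z2_of_Z1 {M : StrictMonoidal} {X V : ob M} (e : hom M (tens V X) munit) (c : hom M munit (tens X V))
  (uniq : forall Z (g1 g2 : hom M Z V), e \o tensm g1 (idm X) = e \o tensm g2 (idm X) -> g1 = g2) :
  Z1c e c = idm X -> Z2c e c = idm V.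
Proof.
  intros H1. apply uniq. rewrite tensm_idid /Z2c !tensm_compl. rnorm. rewrite S1.
  rewrite Kr //.
Qed.

Definition theta {M : StrictMonoidal} (L : LeftClosed M) (X V : ob M) (e : hom M (tens V X) munit)
  : hom M (tens X V) (lihom L X X) :=
  lcurry L (castm (runit_ob X) \o tensm (idm X) e \o castm (eq_sym (assoc_ob X V X))).

Lemma theta_iso {M : StrictMonoidal} (L : LeftClosed M) {X V : ob M} (e : hom M (tens V X) munit)
  (c : hom M munit (tens X V)) :
  Z1c e c = idm X -> Z2c e c = idm V -> is_iso (theta L X V e).
Proof.
  intros H1 H2.
  exists (tensm (lev L X X) (idm V) \o castm (assoc_ob (lihom L X X) X V)
     \o tensm (idm (lihom L X X)) c \o castm (eq_sym (runit_ob (lihom L X X)))).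
  split.
  - rnorm. rewrite runit_nat'. rewrite (rwk1 (interch2 (theta L X V e) c)) -(rwk1 (interch1 (theta L X V e) c)).
    rewrite (rwk (assoc_nat1 _)). rewrite (rwk1 (eq_sym (tensm_compl _ _))). rewrite /theta lcurry_spec.
    by apply K2.
  - transitivity (lcurry L (lev L X X)).
    + apply lcurry_uniq. rewrite !tensm_compl. rnorm. rewrite /theta (rwk1 (lcurry_spec L _)).
      rnorm. rewrite S2. rewrite Kr //. apply comp_id_r.
    + symmetry. apply lcurry_uniq. by rewrite tensm_idid comp_id_r.
Qed.

Lemma iso_mid {C : Category} {A B A' B' : ob C} (a : hom C B B') (f : hom C A B) (b : hom C A' A)
  (t : hom C A' B') : is_iso a -> is_iso b -> is_iso t -> a \o f \o b = t -> is_iso f.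
Proof.
  intros [ai [ha1 ha2]] [bi [hb1 hb2]] [ti [ht1 ht2]] H.
  have Haf : a \o f = t \o bi by rewrite -H -comp_assoc hb2 comp_id_r.
  have Hfb : f \o b = ai \o t by rewrite -H -!comp_assoc (comp_assoc ai a) ha1 comp_id_l.
  exists (b \o ti \o a). split.
  - by rewrite -!comp_assoc Haf (comp_assoc ti t) ht1 comp_id_l hb2.
  - by rewrite !comp_assoc Hfb -(comp_assoc ai t ti) ht2 comp_id_r ha1.
Qed.

Lemma U2_natl {D C : StrictMonoidal} (U : StrongMonoidalFunctor D C) {A A' B : ob D} (f : hom D A A') :
  fmap U (tensm f (idm B)) \o U2 U A B = U2 U A' B \o tensm (fmap U f) (idm (U B)).
Proof. by rewrite U2_nat fmap_id. Qed.

Lemma U2_natr {D C : StrictMonoidal} (U : StrongMonoidalFunctor D C) {A B B' : ob D} (f : hom D B B') :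
  fmap U (tensm (idm A) f) \o U2 U A B = U2 U A B' \o tensm (idm (U A)) (fmap U f).
Proof. by rewrite U2_nat fmap_id. Qed.

Lemma U2_assoc' {D C : StrictMonoidal} (U : StrongMonoidalFunctor D C) (A B E : ob D) :
  U2 U (tens A B) E \o tensm (U2 U A B) (idm (U E))
  = fmap U (castm (assoc_ob A B E)) \o U2 U A (tens B E) \o tensm (idm (U A)) (U2 U B E)
    \o castm (eq_sym (assoc_ob (U A) (U B) (U E))).
Proof. by rewrite -U2_assoc -comp_assoc castm_comp castm_refl' comp_id_r. Qed.

Lemma U2_runit' {D C : StrictMonoidal} (U : StrongMonoidalFunctor D C) (U0i : hom C (U munit) munit)
  (A : ob D) : U0 U \o U0i = idm (U munit) ->
  fmap U (castm (runit_ob A)) \o U2 U A munit = castm (runit_ob (U A)) \o tensm (idm (U A)) U0i.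
Proof.
  intros h.
  transitivity (fmap U (castm (runit_ob A)) \o U2 U A munit \o tensm (idm (U A)) (U0 U) \o tensm (idm (U A)) U0i).
  - by rewrite -comp_assoc -tensm_compr h tensm_idid comp_id_r.
  - rewrite -(comp_assoc _ (U2 U A munit)) U2_runit comp_assoc -fmap_comp castm_comp castm_refl' fmap_id.
    by rewrite comp_id_l.
Qed.

Theorem mainTheorem4 (D C : StrictMonoidal) (LD : LeftClosed D) (LC : LeftClosed C)
    (U : StrongMonoidalFunctor D C) :
  conservative U -> left_closed_functor LD LC U -> left_autonomous C ->
  left_autonomous D.
Proof.
  intros Hcons Hlc HC X.
  set V := lihom LD X munit.
  set e := lev LD X munit.
  have uniqD : forall Z (g1 g2 : hom D Z V), e \o tensm g1 (idm X) = e \o tensm g2 (idm X) -> g1 = g2.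
  { intros Z g1 g2 H. rewrite (lcurry_uniq H). symmetry. by apply lcurry_uniq. }
  destruct (U0_iso U) as [U0i [hU01 hU02]].
  destruct (Hlc X munit) as [Uli [hUl1 hUl2]].
  set e2 := U0i \o fmap U e \o U2 U V X.
  have He2 : forall Z (g : hom C Z (U V)),
      e2 \o tensm g (idm (U X)) = U0i \o (lev LC (U X) (U munit) \o tensm (Ul LD LC U X munit \o g) (idm (U X))).
  { intros Z g. rewrite /e2 tensm_compl. rnorm. rewrite /Ul (rwk1 (lcurry_spec LC _)). by rnorm. }
  have uniqC : forall Z (g1 g2 : hom C Z (U V)), e2 \o tensm g1 (idm (U X)) = e2 \o tensm g2 (idm (U X)) -> g1 = g2.
  { intros Z g1 g2. rewrite !He2. intros H.
    have H' : lev LC (U X) (U munit) \o tensm (Ul LD LC U X munit \o g1) (idm (U X))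
            = lev LC (U X) (U munit) \o tensm (Ul LD LC U X munit \o g2) (idm (U X)).
    { have := f_equal (fun h => U0 U \o h) H. simpl. rewrite !comp_assoc hU02 !comp_id_l. done. }
    have H'' := lcurry_uniq H'. rewrite -(lcurry_uniq (eq_refl (lev LC (U X) (U munit) \o tensm (Ul LD LC U X munit \o g2) (idm (U X))))) in H''.
    by rewrite -(comp_id_l g1) -(comp_id_l g2) -hUl1 -!comp_assoc H''. }
  destruct (HC (U X)) as [W [eps [eta [Hz1 Hz2]]]].
  have [g Hg] : exists g : hom C W (U V), e2 \o tensm g (idm (U X)) = eps.
  { exists (Uli \o lcurry LC (U0 U \o eps)). rewrite He2 (comp_assoc (Ul LD LC U X munit) Uli) hUl2 comp_id_l lcurry_spec.
    by rewrite comp_assoc hU01 comp_id_l. }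
  set c2 := tensm (idm (U X)) g \o eta.
  have Z1C : Z1c e2 c2 = idm (U X).
  { etransitivity; [|exact Hz1]. rewrite /Z1c /c2 tensm_compl. rnorm.
    rewrite (rwk (assoc_nat' (idm (U X)) g (idm (U X)))).
    rewrite (rwk1 (eq_sym (tensm_compr _ _))) Hg. reflexivity. }
  have Z2C := Z2_of_Z1 e2 c2 uniqC Z1C.
  have isoC := theta_iso LC e2 c2 Z1C Z2C.
  set th := theta LD X V e.
  have Eq : Ul LD LC U X X \o fmap U th \o U2 U X V = theta LC (U X) (U V) e2.
  { rewrite /theta. apply lcurry_uniq.
    rewrite !tensm_compl. rnorm. rewrite /Ul (rwk1 (lcurry_spec LC _)). rnorm.
    rewrite -(rwk (U2_natl U th)).
    rewrite (rwk1 (eq_sym (fmap_comp U _ _))).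
    rewrite /th /theta lcurry_spec !fmap_comp. rnorm.
    rewrite U2_assoc'. rnorm.
    rewrite (rwk1 (eq_sym (fmap_comp U (castm (eq_sym (assoc_ob X V X))) (castm (assoc_ob X V X))))).
    rewrite castm_comp castm_refl' fmap_id comp_id_l.
    rewrite (rwk (U2_natr U e)).
    rewrite (rwk (U2_runit' U U0i X hU02)).
    rewrite /e2 !tensm_compr. rnorm. reflexivity. }
  have isoUth : is_iso (fmap U th).
  { apply (iso_mid _ _ _ _ (Hlc X X) (U2_iso U X V) isoC Eq). }
  destruct (Hcons _ _ _ isoUth) as [thi [ht1 ht2]].
  set j := lcurry LD (castm (lunit_ob X)) : hom D munit (lihom LD X X).
  have Z1D : Z1c e (thi \o j) = idm X.
  { rewrite /Z1c tensm_compl.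
    transitivity (lev LD X X \o tensm th (idm X) \o (tensm thi (idm X) \o tensm j (idm X)) \o castm (eq_sym (lunit_ob X))).
    - by rewrite /th /theta lcurry_spec.
    - rnorm. rewrite (rwk1 (eq_sym (tensm_compl th thi))) ht2 tensm_idid comp_id_l.
      rewrite /j (rwk1 (lcurry_spec LD _)) castm_comp castm_refl'. reflexivity. }
  exists V, e, (thi \o j). split; [exact Z1D | exact (Z2_of_Z1 e (thi \o j) uniqD Z1D)].
Qed.
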